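(* Under the standing assumptions, let $\rho_{k+1}\ge\rho_k>0$ and $\sigma_k\ge\sigma_{k+1}>0$. Then for every $x\in X$, $$\|y^*_{\rho_{k+1},\sigma_{k+1}}(x)-y^*_{\rho_k,\sigma_k}(x)\|\le\frac{\rho_{k+1}-\rho_k}{\sigma_k}M^2+\frac{\sigma_k-\sigma_{k+1}}{\sigma_k}M .$$
   Context: Standing assumptions: $X\subset\mathbb{R}^n$, $Y\subset\mathbb{R}^m$ nonempty, convex, compact; $f$ continuously differentiable with Lipschitz gradient on $X\times Y$, $f(x,\cdot)$ concave on $Y$; $c=(c_1,\dots,c_p)$ with continuously differentiable components having Lipschitz gradients, each $c_i(x,\cdot)$ convex on $Y$. Notation: $[z]_+=\max\{z,0\}$ componentwise; $\psi_{\rho,\sigma}(x,y):=f(x,y)-\frac{\rho}{2}\|[c(x,y)]_+\|^2-\frac{\sigma}{2}\|y\|^2$; $y^*_{\rho,\sigma}(x)$ is the unique maximizer of $\psi_{\rho,\sigma}(x,\cdot)$ over $Y$. $M$ is any constant with $M\ge\sup_{X\times Y}\|c(x,y)\|$, $M\ge\sup_{X\times Y}\|\nabla c(x,y)\|$ (operator norm of the Jacobian of $c$) and $M\ge\sup_{y\in Y}\|y\|$. *)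

(* Defs.v *)
From HB Require Import structures.
From mathcomp Require Import all_boot all_order all_algebra.
From mathcomp Require Import all_classical all_reals all_analysis.
Set Implicit Arguments. Unset Strict Implicit. Unset Printing Implicit Defensive.
Import Order.TTheory GRing.Theory Num.Theory.
Import numFieldNormedType.Exports.
Local Open Scope classical_set_scope.
Local Open Scope ring_scope.

(* Euclidean norm on row vectors (the library's norm on 'rV is the max norm). *)
Definition enorm {R : realType} {k : nat} (v : 'rV[R]_k) : R :=
  Num.sqrt (\sum_(i < k) (v ord0 i) ^+ 2).

Definition pospart {R : realType} {k : nat} (v : 'rV[R]_k) : 'rV[R]_k :=
  map_mx (fun a => Num.max a 0) v.

Definition cvx_set {R : realType} {k : nat} (A : set 'rV[R]_k) : Prop :=
  forall u v, A u -> A v -> forall t : R, 0 <= t <= 1 ->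
    A (t *: u + (1 - t) *: v).

Definition concave_on {R : realType} {k : nat} (A : set 'rV[R]_k)
  (g : 'rV[R]_k -> R) : Prop :=
  forall u v, A u -> A v -> forall t : R, 0 <= t <= 1 ->
    t * g u + (1 - t) * g v <= g (t *: u + (1 - t) *: v).

Definition convex_on {R : realType} {k : nat} (A : set 'rV[R]_k)
  (g : 'rV[R]_k -> R) : Prop :=
  forall u v, A u -> A v -> forall t : R, 0 <= t <= 1 ->
    g (t *: u + (1 - t) *: v) <= t * g u + (1 - t) * g v.

Definition joint {R : realType} {n m : nat} {T : Type}
  (g : 'rV[R]_n -> 'rV[R]_m -> T) : 'rV[R]_(n + m) -> T :=
  fun z => g (lsubmx z) (rsubmx z).

Definition prodset {R : realType} {n m : nat} (X : set 'rV[R]_n)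
  (Y : set 'rV[R]_m) : set 'rV[R]_(n + m) :=
  [set z | X (lsubmx z) /\ Y (rsubmx z)].

Definition C11_on {R : realType} {k : nat} (A : set 'rV[R]_k)
  (g : 'rV[R]_k -> R) : Prop :=
  (forall z, A z -> differentiable g z) /\
  exists L : R, forall z1 z2, A z1 -> A z2 -> forall v : 'rV[R]_k,
    `|'d g z1 v - 'd g z2 v| <= L * enorm (z1 - z2) * enorm v.

Definition psi {R : realType} {n m p : nat}
  (f : 'rV[R]_n -> 'rV[R]_m -> R) (c : 'rV[R]_n -> 'rV[R]_m -> 'rV[R]_p)
  (rho sigma : R) (x : 'rV[R]_n) (y : 'rV[R]_m) : R :=
  f x y - rho / 2 * (enorm (pospart (c x y))) ^+ 2 - sigma / 2 * (enorm y) ^+ 2.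

Definition is_ystar {R : realType} {n m p : nat} (Y : set 'rV[R]_m)
  (f : 'rV[R]_n -> 'rV[R]_m -> R) (c : 'rV[R]_n -> 'rV[R]_m -> 'rV[R]_p)
  (rho sigma : R) (x : 'rV[R]_n) (y : 'rV[R]_m) : Prop :=
  Y y /\ forall y', Y y' -> psi f c rho sigma x y' <= psi f c rho sigma x y.

(* Main.v *)
Require Import Defs.
From HB Require Import structures.
From mathcomp Require Import all_boot all_order all_algebra.
From mathcomp Require Import all_classical all_reals all_analysis.
From mathcomp Require Import ring lra.
Import Order.TTheory GRing.Theory Num.Theory.
Import numFieldNormedType.Exports.
Local Open Scope classical_set_scope.
Local Open Scope ring_scope.
Set Implicit Arguments. Unset Strict Implicit.

Section H.
Variable R : realType.

Definition sq {k} (u : 'rV[R]_k) := \sum_(i < k) (u ord0 i) ^+ 2.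
Definition dot {k} (u v : 'rV[R]_k) := \sum_(i < k) (u ord0 i * v ord0 i).

Lemma sq_ge0 k (u : 'rV[R]_k) : 0 <= sq u.
Proof. by apply: sumr_ge0 => i _; rewrite sqr_ge0. Qed.

Lemma enorm_sq k (u : 'rV[R]_k) : enorm u ^+ 2 = sq u.
Proof. by rewrite /enorm sqr_sqrtr // sq_ge0. Qed.

Lemma enorm_ge0 k (u : 'rV[R]_k) : 0 <= enorm u.
Proof. exact: sqrtr_ge0. Qed.

Lemma sq_lin k (u v : 'rV[R]_k) (l : R) :
  \sum_(i < k) (u ord0 i + l * v ord0 i) ^+ 2 = sq u + 2 * l * dot u v + l ^+ 2 * sq v.
Proof.
rewrite /sq /dot mulr_sumr mulr_sumr -!big_split /=; apply: eq_bigr => i _; ring.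
Qed.

Lemma sq_eq0 k (u : 'rV[R]_k) : sq u = 0 -> forall i, u ord0 i = 0.
Proof.
move=> /eqP; rewrite psumr_eq0; last by move=> i _; rewrite sqr_ge0.
move=> /allP H i; have /H := mem_index_enum i; rewrite implyTb sqrf_eq0.
by move/eqP.
Qed.

Lemma cs_sq k (u v : 'rV[R]_k) : dot u v ^+ 2 <= sq u * sq v.
Proof.
have [/eqP|vp] := eqVneq (sq v) 0.
  move=> /eqP /sq_eq0 H; rewrite /dot big1 ?expr0n ?mulr_ge0 ?sq_ge0 // => i _.
  by rewrite H mulr0.
have vp' : 0 < sq v by rewrite lt0r vp sq_ge0.
have : 0 <= \sum_(i < k) (u ord0 i + (- (dot u v / sq v)) * v ord0 i) ^+ 2.
  by apply: sumr_ge0 => i _; exact: sqr_ge0.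
rewrite sq_lin => H.
have : 0 <= (sq u + 2 * - (dot u v / sq v) * dot u v + (- (dot u v / sq v)) ^+ 2 * sq v) * sq v.
  by rewrite mulr_ge0 // sq_ge0.
have -> : (sq u + 2 * - (dot u v / sq v) * dot u v + (- (dot u v / sq v)) ^+ 2 * sq v) * sq v
   = sq u * sq v - dot u v ^+ 2.
  by field; rewrite vp.
by rewrite subr_ge0.
Qed.

Lemma cs k (u v : 'rV[R]_k) : dot u v <= enorm u * enorm v.
Proof.
apply: le_trans (ler_norm _) _.
rewrite -sqrtr_sqr /enorm -sqrtrM ?sq_ge0 // ler_sqrt ?mulr_ge0 ?sq_ge0 //.
exact: cs_sq.
Qed.

Lemma sqD k (u v : 'rV[R]_k) : sq (u + v) = sq u + 2 * dot u v + sq v.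
Proof.
rewrite /sq /dot mulr_sumr -!big_split /=; apply: eq_bigr => i _; rewrite !mxE; ring.
Qed.

Lemma enormD k (u v : 'rV[R]_k) : enorm (u + v) <= enorm u + enorm v.
Proof.
rewrite -(ger0_norm (addr_ge0 (enorm_ge0 u) (enorm_ge0 v))) -sqrtr_sqr /enorm.
rewrite ler_sqrt ?sqr_ge0 // -/(sq (u + v)) sqD sqrrD !enorm_sq.
have := cs u v; rewrite -[sq u]enorm_sq -[sq v]enorm_sq -/(enorm u) -/(enorm v) mulr2n; lra.
Qed.

Lemma enormZ k (u : 'rV[R]_k) (t : R) : enorm (t *: u) = `|t| * enorm u.
Proof.
rewrite /enorm -sqrtr_sqr -sqrtrM ?sqr_ge0 //; congr Num.sqrt.
rewrite mulr_sumr; apply: eq_bigr => i _; rewrite !mxE; ring.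
Qed.

Lemma enormN k (u : 'rV[R]_k) : enorm (- u) = enorm u.
Proof. by rewrite -scaleN1r enormZ normrN normr1 mul1r. Qed.

Lemma enorm_sub k (u v : 'rV[R]_k) : enorm (u - v) = enorm (v - u).
Proof. by rewrite -enormN opprB. Qed.

Lemma enorm_pos k (u : 'rV[R]_k) : enorm (pospart u) <= enorm u.
Proof.
rewrite /enorm ler_sqrt ?sq_ge0 //; apply: ler_sum => i _; rewrite mxE.
by case: (leP (u ord0 i) 0) => h; nra.
Qed.

Lemma enorm_le_sum k (u : 'rV[R]_k) : enorm u <= \sum_(i < k) `|u ord0 i|.
Proof.
have s0 : 0 <= \sum_(i < k) `|u ord0 i| by apply: sumr_ge0 => i _.
rewrite -(ger0_norm s0) -sqrtr_sqr /enorm ler_sqrt ?sqr_ge0 //.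
rewrite /index_enum; elim: (Finite.enum _) => [|j r IH]; first by rewrite !big_nil expr0n.
rewrite !big_cons.
have b0 : 0 <= \sum_(i <- r) `|u ord0 i| by apply: sumr_ge0 => i _.
rewrite sqrrD -real_normK ?num_real //.
have := normr_ge0 (u ord0 j); nra.
Qed.

Lemma hsq_ineq (A B : R) :
  Num.max B 0 ^+ 2 - Num.max A 0 ^+ 2 <= 2 * Num.max B 0 * (B - A).
Proof.
have := sqr_ge0 (B - A).
by case: (leP A 0) => ha; case: (leP B 0) => hb; nra.
Qed.

Lemma hsq_conv (X A B t : R) : 0 <= t <= 1 -> X <= t * A + (1 - t) * B ->
  Num.max X 0 ^+ 2 <= t * Num.max A 0 ^+ 2 + (1 - t) * Num.max B 0 ^+ 2.
Proof.
move=> /andP[t0 t1] hX.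
have hm : Num.max X 0 <= t * Num.max A 0 + (1 - t) * Num.max B 0.
  by case: (leP X 0) => hx; case: (leP A 0) => ha; case: (leP B 0) => hb; nra.
have m0 : 0 <= Num.max X 0 by case: (leP X 0) => hx; lra.
have a0 : 0 <= Num.max A 0 by case: (leP A 0) => hx; lra.
have b0 : 0 <= Num.max B 0 by case: (leP B 0) => hx; lra.
have t1' : 0 <= 1 - t by lra.
have := mulr_ge0 (mulr_ge0 t0 t1') (sqr_ge0 (Num.max A 0 - Num.max B 0)).
have : Num.max X 0 ^+ 2 <= (t * Num.max A 0 + (1 - t) * Num.max B 0) ^+ 2.
  by rewrite ler_pXn2r // ?nnegrE //; nra.
nra.
Qed.

Lemma sq_conv k (u v : 'rV[R]_k) (t : R) :
  sq (t *: u + (1 - t) *: v) = t * sq u + (1 - t) * sq v - t * (1 - t) * sq (u - v).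
Proof.
rewrite /sq !mulr_sumr -!big_split -sumrB /=; apply: eq_bigr => i _; rewrite !mxE; ring.
Qed.

Lemma enorm_pos_sq k (u : 'rV[R]_k) :
  enorm (pospart u) ^+ 2 = \sum_(i < k) Num.max (u ord0 i) 0 ^+ 2.
Proof. by rewrite enorm_sq /sq; apply: eq_bigr => i _; rewrite mxE. Qed.

Lemma psi_strong n m p (Y : set 'rV[R]_m)
  (f : 'rV[R]_n -> 'rV[R]_m -> R) (c : 'rV[R]_n -> 'rV[R]_m -> 'rV[R]_p)
  (rho sigma : R) (x : 'rV[R]_n)
  (hf : concave_on Y (f x))
  (hc : forall i : 'I_p, convex_on Y (fun y => c x y ord0 i))
  (hr : 0 <= rho) u v t : Y u -> Y v -> 0 <= t <= 1 ->
  t * psi f c rho sigma x u + (1 - t) * psi f c rho sigma x v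
   + sigma / 2 * (t * (1 - t)) * sq (u - v)
  <= psi f c rho sigma x (t *: u + (1 - t) *: v).
Proof.
move=> Yu Yv t01.
have H1 := hf u v Yu Yv t t01.
have H2 : enorm (pospart (c x (t *: u + (1 - t) *: v))) ^+ 2 <=
   t * enorm (pospart (c x u)) ^+ 2 + (1 - t) * enorm (pospart (c x v)) ^+ 2.
  rewrite !enorm_pos_sq !mulr_sumr -big_split /=; apply: ler_sum => i _.
  by apply: hsq_conv => //; apply: hc.
have H3 := ler_wpM2l (divr_ge0 hr (ler0n R 2)) H2.
rewrite /psi !enorm_sq sq_conv.
rewrite !enorm_sq in H3.
lra.
Qed.

Lemma dotNl k (u v : 'rV[R]_k) : dot (- u) v = - dot u v.
Proof. by rewrite /dot -sumrN; apply: eq_bigr => i _; rewrite mxE mulNr. Qed.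

Lemma sq_enorm k (u : 'rV[R]_k) : sq u = enorm u ^+ 2.
Proof. by rewrite enorm_sq. Qed.

End H.
Unset Implicit Arguments.

Theorem lemmaD3 (R : realType) (n m p : nat)
  (X : set 'rV[R]_n) (Y : set 'rV[R]_m)
  (f : 'rV[R]_n -> 'rV[R]_m -> R) (c : 'rV[R]_n -> 'rV[R]_m -> 'rV[R]_p)
  (M : R)
  (* X, Y nonempty, convex, compact *)
  (hX0 : X !=set0) (hXc : cvx_set X) (hXk : compact X)
  (hY0 : Y !=set0) (hYc : cvx_set Y) (hYk : compact Y)
  (* f C^1 with Lipschitz gradient on X x Y, concave in y *)
  (hf : C11_on (prodset X Y) (joint f))
  (hfc : forall x, X x -> concave_on Y (f x))
  (* each c_i C^1 with Lipschitz gradient on X x Y, convex in y *)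
  (hc : forall i : 'I_p, C11_on (prodset X Y) (joint (fun x y => c x y ord0 i)))
  (hcc : forall (i : 'I_p) x, X x -> convex_on Y (fun y => c x y ord0 i))
  (* the constant M *)
  (hMc : forall x y, X x -> Y y -> enorm (c x y) <= M)
  (hMJ : forall z, prodset X Y z -> forall v : 'rV[R]_(n + m),
           enorm ('d (joint c) z v) <= M * enorm v)
  (hMy : forall y, Y y -> enorm y <= M)
  (rho_k rho_k1 sigma_k sigma_k1 : R)
  (hrho : 0 < rho_k) (hrho' : rho_k <= rho_k1)
  (hsig : 0 < sigma_k1) (hsig' : sigma_k1 <= sigma_k)
  (x : 'rV[R]_n) (hx : X x)
  (y_k y_k1 : 'rV[R]_m)
  (hyk : is_ystar Y f c rho_k sigma_k x y_k)
  (hyk1 : is_ystar Y f c rho_k1 sigma_k1 x y_k1) :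
  enorm (y_k1 - y_k) <=
    (rho_k1 - rho_k) / sigma_k * M ^+ 2 + (sigma_k - sigma_k1) / sigma_k * M.
Proof.
have subr_ge0_proof : forall a b : R, a <= b -> 0 <= b - a by move=> a b; rewrite subr_ge0.
have M0 : 0 <= M by case: hY0 => y Yy; exact: le_trans (enorm_ge0 y) (hMy y Yy).
move: hyk hyk1 => [Y0 opt0] [Y1 opt1].
rewrite enorm_sub.
set e := y_k - y_k1.
set d := enorm e.
have d0 : 0 <= d by exact: enorm_ge0.
have hstr := psi_strong sigma_k (hfc x hx) (fun i => hcc i x hx) (ltW hrho).
have key : forall t, 0 < t <= 1 -> sigma_k * (t * (1 - t)) * d ^+ 2 <=
   (rho_k1 - rho_k) * M * enorm (c x (y_k1 + t *: e) - c x y_k1)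
   + (sigma_k - sigma_k1) * M * (t * d).
  move=> t /andP[t0 t1]; have t01 : 0 <= t <= 1 by rewrite ltW.
  have Eb : y_k1 + t *: e = t *: y_k + (1 - t) *: y_k1.
    by apply/rowP => i; rewrite !mxE; ring.
  have Yb : Y (y_k1 + t *: e) by rewrite Eb; apply: hYc.
  have HA : sigma_k / 2 * (1 - t) * d ^+ 2 <=
      psi f c rho_k sigma_k x y_k - psi f c rho_k sigma_k x y_k1.
    have h1 := hstr _ _ _ Y1 Y0 t01.
    have h2 := opt0 _ (hYc _ _ Y1 Y0 t t01).
    rewrite sq_enorm enorm_sub -/e -/d in h1.
    rewrite -(ler_pM2l t0); nra.
  have HB := hstr _ _ _ Y0 Y1 t01.
  rewrite sq_enorm -/e -/d -Eb in HB.
  have HC := opt1 _ Yb.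
  have HE : enorm (pospart (c x (y_k1 + t *: e))) ^+ 2 - enorm (pospart (c x y_k1)) ^+ 2
      <= 2 * M * enorm (c x (y_k1 + t *: e) - c x y_k1).
    rewrite !enorm_pos_sq -sumrB.
    apply: (@le_trans _ _ (2 * dot (pospart (c x (y_k1 + t *: e))) (c x (y_k1 + t *: e) - c x y_k1))).
      rewrite /dot mulr_sumr; apply: ler_sum => i _; rewrite !mxE mulrA; exact: hsq_ineq.
    rewrite -mulrA ler_pM2l // (le_trans (cs _ _)) // ler_wpM2r ?enorm_ge0 //.
    exact: le_trans (enorm_pos _) (hMc _ _ hx Yb).
  have HF : enorm y_k1 ^+ 2 - enorm (y_k1 + t *: e) ^+ 2 <= 2 * M * (t * d).
    rewrite !enorm_sq sqD.
    have := cs (- y_k1) (t *: e); rewrite dotNl enormN enormZ (ger0_norm (ltW t0)) -/d => h.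
    have := sq_ge0 (t *: e).
    have := hMy _ Y1.
    have := mulr_ge0 (ltW t0) d0.
    nra.
  have HE' := ler_wpM2l (divr_ge0 (subr_ge0_proof _ _ hrho') (ler0n R 2)) HE.
  have HF' := ler_wpM2l (divr_ge0 (subr_ge0_proof _ _ hsig') (ler0n R 2)) HF.
  have HA' := ler_wpM2l (ltW t0) HA.
  move: HB HC HA' HE' HF'; rewrite /psi; lra.
pose z : 'rV[R]_(n + m) := row_mx x y_k1.
pose v : 'rV[R]_(n + m) := row_mx 0 e.
have Hz : prodset X Y z by rewrite /prodset /z /= row_mxKl row_mxKr.
have Ev : enorm v = d.
  rewrite /d /enorm /v big_split_ord /=; congr Num.sqrt.
  rewrite big1 ?add0r; last by move=> i _; rewrite row_mxEl mxE expr0n.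
  by apply: eq_bigr => i _; rewrite row_mxEr.
have Ej : forall h : R, joint c (h *: v + z) = c x (y_k1 + h *: e).
  move=> h; rewrite /joint /v /z scale_row_mx add_row_mx row_mxKl row_mxKr.
  by rewrite scaler0 add0r addrC.
have Jz : joint c z = c x y_k1 by rewrite /joint row_mxKl row_mxKr.
have Hdiff : differentiable (joint c) z.
  have -> : joint c = \sum_(j < p) (fun w => joint c w ord0 j *: 'e_j).
    rewrite fct_sumE; apply: funext => w; exact: row_sum_delta.
  apply: differentiable_sum => j; apply: differentiableZl; exact: (hc j).1 z Hz.
have Hw : enorm ('D_v (joint c) z) <= M * d by rewrite deriveE // -Ev; exact: hMJ.
have Hcvg : (fun h => h^-1 *: ((joint c \o shift z) (h *: v) - joint c z)) @ 0^'
    --> 'D_v (joint c) z.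
  exact: (diff_derivable (v:=v) Hdiff).
set w := 'D_v (joint c) z in Hw Hcvg.
pose L := (rho_k1 - rho_k) * M * M + (sigma_k - sigma_k1) * M.
have main : sigma_k * d ^+ 2 <= L * d.
  apply/ler_addgt0Pr => eps eps0.
  pose Q := (rho_k1 - rho_k) * M * p%:R.
  have Q0 : 0 <= Q by rewrite /Q !mulr_ge0 // subr_ge0.
  pose S := sigma_k * d ^+ 2.
  have S0 : 0 <= S by rewrite /S mulr_ge0 // ?sqr_ge0 // ltW // (lt_le_trans hsig hsig').
  pose eta := eps / (2 * (Q + 1)).
  pose del := Num.min 1 (eps / (2 * (S + 1))).
  have eta0 : 0 < eta by rewrite /eta divr_gt0 // mulr_gt0 //; lra.
  have del0 : 0 < del by rewrite /del lt_min ltr01 /= divr_gt0 // mulr_gt0 //; lra.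
  have /cvgrPdist_le /(_ eta eta0) Hn := Hcvg.
  have Hn' : \forall h \near 0^'+, `|w - h^-1 *: ((joint c \o shift z) (h *: v) - joint c z)| <= eta.
    pose P := fun h : R => `|w - h^-1 *: ((joint c \o shift z) (h *: v) - joint c z)| <= eta.
    have H1 : \forall h \near (0:R), h != 0 -> P h := Hn.
    have H2 : \forall h \near (0:R), 0 < h -> P h.
      by move: H1; apply: filterS => h Hh h0; apply: Hh; rewrite gt_eqF.
    exact: H2.
  have [t [ht1 [ht2 ht3]]] : exists t, `|w - t^-1 *: ((joint c \o shift z) (t *: v) - joint c z)| <= eta
      /\ 0 < t /\ t < del.
    have Hall : \forall h \near (0:R)^'+, `|w - h^-1 *: ((joint c \o shift z) (h *: v) - joint c z)| <= eta
      /\ 0 < h /\ h < del.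
      near=> h; split; first by near: h; exact: Hn'.
      by split; near: h; [exact: nbhs_right_gt | exact: nbhs_right_lt].
    exact: filter_ex Hall.
  rewrite /= Ej Jz in ht1.
  set q := t^-1 *: (c x (y_k1 + t *: e) - c x y_k1) in ht1.
  have Eq : c x (y_k1 + t *: e) - c x y_k1 = t *: q.
    by rewrite /q scalerA divff ?scale1r // gt_eqF.
  have Hq : enorm q <= M * d + p%:R * eta.
    have -> : q = w + (q - w) by rewrite addrC subrK.
    apply: le_trans (enormD _ _) _; apply: lerD => //.
    rewrite enorm_sub; apply: le_trans (enorm_le_sum _) _.
    have -> : p%:R * eta = \sum_(i < p) eta by rewrite sumr_const card_ord mulr_natl.
    apply: ler_sum => i _.
    apply: le_trans ht1.
    rewrite [leRHS]/Num.Def.normr/= mx_normrE.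
    apply: le_trans; last exact: (le_bigmax _ _ (ord0, i)).
    by rewrite !mxE.
  move: ht3; rewrite /del lt_min => /andP[ht31 ht32].
  have Ht := key t _; rewrite Eq enormZ (ger0_norm (ltW ht2)) in Ht.
  have {}Ht := Ht (ltac:(rewrite ht2 ltW //)).
  have Hq' := ler_wpM2l (mulr_ge0 (mulr_ge0 (subr_ge0_proof _ _ hrho') M0) (ltW ht2)) Hq.
  have Hdiv : S - S * t <= L * d + Q * eta.
    rewrite -(ler_pM2l ht2) /S /L /Q; nra.
  have c1 : S * t <= eps / 2.
    have := ler_wpM2l (addr_ge0 S0 ler01) (ltW ht32).
    have -> : (S + 1) * (eps / (2 * (S + 1))) = eps / 2 by field; lra.
    nra.
  have c2 : Q * eta <= eps / 2.
    have -> : eps / 2 = (Q + 1) * eta by rewrite /eta; field; lra.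
    have := ltW eta0; nra.
  move: Hdiv c1 c2; rewrite /S; lra.
have sk0 : 0 < sigma_k by exact: lt_le_trans hsig hsig'.
have -> : (rho_k1 - rho_k) / sigma_k * M ^+ 2 + (sigma_k - sigma_k1) / sigma_k * M
    = L / sigma_k by rewrite /L; field; rewrite gt_eqF.
have L0 : 0 <= L.
  rewrite /L addr_ge0 // ?mulr_ge0 // subr_ge0 //.
rewrite ler_pdivlMr //.
have [->|dp] := eqVneq d 0; first by rewrite mul0r.
have dp' : 0 < d by rewrite lt0r dp d0.
rewrite -(ler_pM2l dp'); nra.
Unshelve. all: by end_near.
Qed.
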